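(* Let $(M,g)$ be a 5-dimensional Lorentzian manifold, $p\in M$, and suppose the Weyl tensor at $p$ is of primary alignment type II: there is a null frame $(\ell,n,m_3,m_4,m_5)$ in which all Weyl components of positive boost weight vanish while those of boost weight $0$ are not all zero. Define $w_i=\tfrac12\varepsilon_{ijk}C_{01jk}$, $H_{ij}=\sum_k C_{kikj}$, $R=\sum_iH_{ii}$, $S_{ij}=H_{ij}-\tfrac13R\delta_{ij}$, where the spatial vectors $m_i$ are chosen so that $S=\mathrm{diag}(S_3,S_4,S_5)$, and set $R_i=S_i+\tfrac13R$. Then the Weyl operator $\mathsf C:F^{ab}\mapsto\tfrac12C^{ab}{}_{cd}F^{cd}$ on $\wedge^2T_pM$ is nilpotent if and only if, after a suitable permutation of $m_3,m_4,m_5$ (and within such a diagonalizing frame), $$R_4=0,\quad R_3=-R_5\neq0,\quad 2w_3^2=2w_5^2=R_5^2,\quad w_4=0.$$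
   Context: A null frame $(\ell,n,m_i)$, $i=3,4,5$, consists of null vectors $\ell,n$ with $g(\ell,n)=1$ and orthonormal spacelike $m_i$ orthogonal to $\ell,n$; frame index $0$ refers to $\ell$, $1$ to $n$, and $i,j,k\in\{3,4,5\}$ to the $m_i$; the boost weight of a component is the number of $0$-indices minus the number of $1$-indices. $\varepsilon_{ijk}$ is the sign of the permutation $(ijk)$ of $(345)$. *)

(* Defs.v *)
From HB Require Import structures.
From mathcomp Require Import all_boot all_order all_algebra.
From mathcomp Require Import fingroup perm.
From mathcomp Require Import reals.
Set Implicit Arguments. Unset Strict Implicit. Unset Printing Implicit Defensive.
Import Order.TTheory GRing.Theory Num.Theory.
Local Open Scope ring_scope.

(* Frame indices: 'I_5 with 0 = l, 1 = n, 2,3,4 = m_3, m_4, m_5.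
   Spatial indices: 'I_3 with 0,1,2 standing for 3,4,5. *)
Definition fl : 'I_5 := @Ordinal 5 0 isT.
Definition fn : 'I_5 := @Ordinal 5 1 isT.
Definition sp (i : 'I_3) : 'I_5 := @Ordinal 5 i.+2 (ltn_ord i).
Definition m3 : 'I_3 := @Ordinal 3 0 isT.
Definition m4 : 'I_3 := @Ordinal 3 1 isT.
Definition m5 : 'I_3 := @Ordinal 3 2 isT.

Section Defs.
Variable R : realType.

Definition tensor4 := 'I_5 -> 'I_5 -> 'I_5 -> 'I_5 -> R.

(* Null-frame metric g(l,n)=1, g(m_i,m_j)=delta_ij; it is its own inverse. *)
Definition eta (a b : 'I_5) : R :=
  if [|| ((a == 0 :> nat) && (b == 1 :> nat)),
         ((a == 1 :> nat) && (b == 0 :> nat)) |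
         ((a == b) && (1 < a)%N)] then 1 else 0.

(* Algebraic Weyl tensor: frame components C_abcd (all indices down). *)
Definition is_weyl (C : tensor4) : Prop :=
  [/\ (forall a b c d, C a b c d = - C b a c d),
      (forall a b c d, C a b c d = - C a b d c),
      (forall a b c d, C a b c d = C c d a b),
      (forall a b c d, C a b c d + C a c d b + C a d b c = 0) &
      (forall b d, \sum_(a < 5) \sum_(c < 5) eta a c * C a b c d = 0)].

Definition bw1 (a : 'I_5) : int := (a == 0 :> nat)%:Z - (a == 1 :> nat)%:Z.
Definition bw (a b c d : 'I_5) : int := bw1 a + bw1 b + bw1 c + bw1 d.

Definition typeII_frame (C : tensor4) : Prop :=
  (forall a b c d, (0 < bw a b c d)%R -> C a b c d = 0) /\
  (exists a b c d, bw a b c d = 0 /\ C a b c d != 0).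

Definition Cup (C : tensor4) a b c d : R :=
  \sum_(e < 5) \sum_(f < 5) eta a e * eta b f * C e f c d.

Definition weylOp (C : tensor4) (F : 'M[R]_5) : 'M[R]_5 :=
  \matrix_(a < 5, b < 5) (2^-1 * \sum_(c < 5) \sum_(d < 5) Cup C a b c d * F c d).

Definition weyl_nilpotent (C : tensor4) : Prop :=
  exists k : nat, forall F : 'M[R]_5, F^T = - F -> iter k (weylOp C) F = 0.

Definition eps (i j k : 'I_3) : R :=
  match nat_of_ord i, nat_of_ord j, nat_of_ord k with
  | 0%N, 1%N, 2%N | 1%N, 2%N, 0%N | 2%N, 0%N, 1%N => 1
  | 0%N, 2%N, 1%N | 2%N, 1%N, 0%N | 1%N, 0%N, 2%N => -1
  | _, _, _ => 0
  end.

Definition wv (C : tensor4) (i : 'I_3) : R :=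
  2^-1 * \sum_(j < 3) \sum_(k < 3) eps i j k * C fl fn (sp j) (sp k).
Definition Hm (C : tensor4) (i j : 'I_3) : R :=
  \sum_(k < 3) C (sp k) (sp i) (sp k) (sp j).
Definition Rsc (C : tensor4) : R := \sum_(i < 3) Hm C i i.
Definition Sm (C : tensor4) (i j : 'I_3) : R :=
  Hm C i j - Rsc C / 3%:R * (i == j)%:R.
Definition Ri (C : tensor4) (i : 'I_3) : R := Sm C i i + Rsc C / 3%:R.

(* relabel the spatial frame vectors: new m_(i) := old m_(s i) *)
Definition permFrame (s : 'S_3) (a : 'I_5) : 'I_5 :=
  if (a < 2)%N then a else sp (s (inord (a - 2))).
Definition permC (s : 'S_3) (C : tensor4) : tensor4 :=
  fun a b c d => C (permFrame s a) (permFrame s b) (permFrame s c) (permFrame s d).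

End Defs.

(* Main.v *)
Require Import Defs.
From HB Require Import structures.
From mathcomp Require Import all_boot all_order all_algebra.
From mathcomp Require Import fingroup perm.
From mathcomp Require Import reals.
From mathcomp Require Import ring lra.
Import Order.TTheory GRing.Theory Num.Theory.
Set Implicit Arguments. Unset Strict Implicit. Unset Printing Implicit Defensive.
Local Open Scope ring_scope.

Definition o0 : 'I_5 := @Ordinal 5 0 isT.
Definition o1 : 'I_5 := @Ordinal 5 1 isT.
Definition o2 : 'I_5 := @Ordinal 5 2 isT.
Definition o3 : 'I_5 := @Ordinal 5 3 isT.
Definition o4 : 'I_5 := @Ordinal 5 4 isT.
Definition q0 : 'I_3 := @Ordinal 3 0 isT.
Definition q1 : 'I_3 := @Ordinal 3 1 isT.
Definition q2 : 'I_3 := @Ordinal 3 2 isT.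

Lemma sum5 (V : nmodType) (f : 'I_5 -> V) :
  \sum_(i < 5) f i = f o0 + f o1 + f o2 + f o3 + f o4.
Proof.
rewrite !big_ord_recr big_ord0 /= add0r.
by congr (_ + _ + _ + _ + _); congr f; apply/val_inj.
Qed.

Lemma sum3 (V : nmodType) (f : 'I_3 -> V) :
  \sum_(i < 3) f i = f q0 + f q1 + f q2.
Proof.
rewrite !big_ord_recr big_ord0 /= add0r.
by congr (_ + _ + _); congr f; apply/val_inj.
Qed.

Lemma ord5 (a : 'I_5) : a = o0 \/ a = o1 \/ a = o2 \/ a = o3 \/ a = o4.
Proof.
case: a => [[|[|[|[|[|m]]]]] Hm].
- by left; apply/val_inj.
- by right; left; apply/val_inj.
- by right; right; left; apply/val_inj.
- by right; right; right; left; apply/val_inj.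
- by right; right; right; right; apply/val_inj.
- by [].
Qed.

Lemma ord3 (a : 'I_3) : [\/ a = q0, a = q1 | a = q2].
Proof.
case: a => [[|[|[|m]]] Hm].
- by constructor 1; apply/val_inj.
- by constructor 2; apply/val_inj.
- by constructor 3; apply/val_inj.
- by [].
Qed.

Lemma sp0 : sp q0 = o2. Proof. exact/val_inj. Qed.
Lemma sp1 : sp q1 = o3. Proof. exact/val_inj. Qed.
Lemma sp2 : sp q2 = o4. Proof. exact/val_inj. Qed.
Lemma m3q : m3 = q0. Proof. exact/val_inj. Qed.
Lemma m4q : m4 = q1. Proof. exact/val_inj. Qed.
Lemma m5q : m5 = q2. Proof. exact/val_inj. Qed.
Lemma flo : fl = o0. Proof. exact/val_inj. Qed.
Lemma fno : fn = o1. Proof. exact/val_inj. Qed.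

Definition sw (a : 'I_5) : 'I_5 :=
  if val a == 0%N then o1 else if val a == 1%N then o0 else a.

Section Basic.
Variable R : realType.
Variable C : 'I_5 -> 'I_5 -> 'I_5 -> 'I_5 -> R.

Lemma sum_eta (a : 'I_5) (X : 'I_5 -> R) : \sum_(e < 5) Defs.eta R a e * X e = X (sw a).
Proof.
rewrite sum5; case: (ord5 a) => [->|[->|[->|[->|->]]]]; rewrite /Defs.eta /sw /=;
  rewrite ?mul0r ?mul1r ?add0r ?addr0 //.
Qed.

Lemma CupE a b c d : Cup C a b c d = C (sw a) (sw b) c d.
Proof.
rewrite /Cup.
under eq_bigr => e _ do under eq_bigr => f _ do rewrite -mulrA.
under eq_bigr => e _ do rewrite -mulr_sumr sum_eta.
by rewrite sum_eta.
Qed.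

Hypothesis Ha : forall a b c d, C a b c d = - C b a c d.
Hypothesis Hb : forall a b c d, C a b c d = - C a b d c.

Lemma Cdiag1 a c d : C a a c d = 0.
Proof. have := Ha a a c d. lra. Qed.
Lemma Cdiag2 a b c : C a b c c = 0.
Proof. have := Hb a b c c. lra. Qed.

Lemma Tsum (G : 'M[R]_5) a b : G^T = - G ->
  weylOp C G a b =
  C (sw a) (sw b) o0 o1 * G o0 o1 + C (sw a) (sw b) o0 o2 * G o0 o2 +
  C (sw a) (sw b) o0 o3 * G o0 o3 + C (sw a) (sw b) o0 o4 * G o0 o4 +
  C (sw a) (sw b) o1 o2 * G o1 o2 + C (sw a) (sw b) o1 o3 * G o1 o3 +
  C (sw a) (sw b) o1 o4 * G o1 o4 + C (sw a) (sw b) o2 o3 * G o2 o3 +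
  C (sw a) (sw b) o2 o4 * G o2 o4 + C (sw a) (sw b) o3 o4 * G o3 o4.
Proof.
move=> HG.
have Ge : forall x y, G y x = - G x y.
  by move=> x y; have := congr1 (fun M : 'M[R]_5 => M x y) HG; rewrite !mxE.
have Gd : forall x, G x x = 0 by move=> x; have := Ge x x; lra.
rewrite mxE sum5 !sum5 !CupE !Gd !Cdiag2.
rewrite (Ge o0 o1) (Ge o0 o2) (Ge o0 o3) (Ge o0 o4) (Ge o1 o2) (Ge o1 o3)
  (Ge o1 o4) (Ge o2 o3) (Ge o2 o4) (Ge o3 o4).
set x := sw a; set y := sw b.
rewrite (Hb x y o1 o0) (Hb x y o2 o0) (Hb x y o3 o0) (Hb x y o4 o0) (Hb x y o2 o1)
  (Hb x y o3 o1) (Hb x y o4 o1) (Hb x y o3 o2) (Hb x y o4 o2) (Hb x y o4 o3).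
by field; rewrite ?pnatr_eq0.
Qed.

End Basic.

Definition r0 : 'I_4 := @Ordinal 4 0 isT.
Definition r1 : 'I_4 := @Ordinal 4 1 isT.
Definition r2 : 'I_4 := @Ordinal 4 2 isT.
Definition r3 : 'I_4 := @Ordinal 4 3 isT.

Lemma sum4 (V : nmodType) (f : 'I_4 -> V) :
  \sum_(i < 4) f i = f r0 + f r1 + f r2 + f r3.
Proof.
rewrite !big_ord_recr big_ord0 /= add0r.
by congr (_ + _ + _ + _); congr f; apply/val_inj.
Qed.

Lemma ord4 (a : 'I_4) : a = r0 \/ a = r1 \/ a = r2 \/ a = r3.
Proof.
case: a => [[|[|[|[|m]]]] Hm].
- by left; apply/val_inj.
- by right; left; apply/val_inj.
- by right; right; left; apply/val_inj.
- by right; right; right; apply/val_inj.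
- by [].
Qed.

Section Alg.
Variable R : realType.

Lemma mulE3 (A B : 'M[R]_3) i j : (A * B) i j = \sum_k A i k * B k j.
Proof. by rewrite -mulmxE mxE. Qed.
Lemma mulE4 (A B : 'M[R]_4) i j : (A * B) i j = \sum_k A i k * B k j.
Proof. by rewrite -mulmxE mxE. Qed.

Definition c2_3 (A : 'M[R]_3) : R := (0 + A q0 q0 * A q1 q1 - A q0 q1 * A q1 q0) + (0 + A q0 q0 * A q2 q2 - A q0 q2 * A q2 q0) + (0 + A q1 q1 * A q2 q2 - A q1 q2 * A q2 q1).
Definition c3_3 (A : 'M[R]_3) : R := (0 + A q0 q0 * A q1 q1 * A q2 q2 - A q0 q0 * A q1 q2 * A q2 q1 - A q0 q1 * A q1 q0 * A q2 q2 + A q0 q1 * A q1 q2 * A q2 q0 + A q0 q2 * A q1 q0 * A q2 q1 - A q0 q2 * A q1 q1 * A q2 q0).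
Definition c2_4 (A : 'M[R]_4) : R := (0 + A r0 r0 * A r1 r1 - A r0 r1 * A r1 r0) + (0 + A r0 r0 * A r2 r2 - A r0 r2 * A r2 r0) + (0 + A r0 r0 * A r3 r3 - A r0 r3 * A r3 r0) + (0 + A r1 r1 * A r2 r2 - A r1 r2 * A r2 r1) + (0 + A r1 r1 * A r3 r3 - A r1 r3 * A r3 r1) + (0 + A r2 r2 * A r3 r3 - A r2 r3 * A r3 r2).
Definition c3_4 (A : 'M[R]_4) : R := (0 + A r0 r0 * A r1 r1 * A r2 r2 - A r0 r0 * A r1 r2 * A r2 r1 - A r0 r1 * A r1 r0 * A r2 r2 + A r0 r1 * A r1 r2 * A r2 r0 + A r0 r2 * A r1 r0 * A r2 r1 - A r0 r2 * A r1 r1 * A r2 r0) + (0 + A r0 r0 * A r1 r1 * A r3 r3 - A r0 r0 * A r1 r3 * A r3 r1 - A r0 r1 * A r1 r0 * A r3 r3 + A r0 r1 * A r1 r3 * A r3 r0 + A r0 r3 * A r1 r0 * A r3 r1 - A r0 r3 * A r1 r1 * A r3 r0) + (0 + A r0 r0 * A r2 r2 * A r3 r3 - A r0 r0 * A r2 r3 * A r3 r2 - A r0 r2 * A r2 r0 * A r3 r3 + A r0 r2 * A r2 r3 * A r3 r0 + A r0 r3 * A r2 r0 * A r3 r2 - A r0 r3 * A r2 r2 * A r3 r0) + (0 + A r1 r1 * A r2 r2 * A r3 r3 - A r1 r1 * A r2 r3 * A r3 r2 - A r1 r2 * A r2 r1 * A r3 r3 + A r1 r2 * A r2 r3 * A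 r3 r1 + A r1 r3 * A r2 r1 * A r3 r2 - A r1 r3 * A r2 r2 * A r3 r1).
Definition c4_4 (A : 'M[R]_4) : R := (0 + A r0 r0 * A r1 r1 * A r2 r2 * A r3 r3 - A r0 r0 * A r1 r1 * A r2 r3 * A r3 r2 - A r0 r0 * A r1 r2 * A r2 r1 * A r3 r3 + A r0 r0 * A r1 r2 * A r2 r3 * A r3 r1 + A r0 r0 * A r1 r3 * A r2 r1 * A r3 r2 - A r0 r0 * A r1 r3 * A r2 r2 * A r3 r1 - A r0 r1 * A r1 r0 * A r2 r2 * A r3 r3 + A r0 r1 * A r1 r0 * A r2 r3 * A r3 r2 + A r0 r1 * A r1 r2 * A r2 r0 * A r3 r3 - A r0 r1 * A r1 r2 * A r2 r3 * A r3 r0 - A r0 r1 * A r1 r3 * A r2 r0 * A r3 r2 + A r0 r1 * A r1 r3 * A r2 r2 * A r3 r0 + A r0 r2 * A r1 r0 * A r2 r1 * A r3 r3 - A r0 r2 * A r1 r0 * A r2 r3 * A r3 r1 - A r0 r2 * A r1 r1 * A r2 r0 * A r3 r3 + A r0 r2 * A r1 r1 * A r2 r3 * A r3 r0 + A r0 r2 * A r1 r3 * A r2 r0 * A r3 r1 - A r0 r2 * A r1 r3 * A r2 r1 * A r3 r0 - A r0 r3 * A r1 r0 * A r2 r1 * A r3 r2 + A r0 r3 * A r1 r0 * A r2 r2 * A r3 r1 + A r0 r3 * A r1 r1 * A r2 r0 * A r3 r2 - A r0 r3 * A r1 r1 * A r2 r2 * A r3 r0 - A r0 r3 * A r1 r2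 * A r2 r0 * A r3 r1 + A r0 r3 * A r1 r2 * A r2 r1 * A r3 r0).

Lemma CH3 (A : 'M[R]_3) :
  A^+3 = \tr A *: A^+2 - c2_3 A *: A + (c3_3 A)%:M.
Proof.
apply/matrixP => i j.
rewrite !exprS expr0 mulr1 !mxE !sum3 !mulE3 !sum3 /mxtrace !sum3.
by case: (ord3 i) => [->|->|->]; case: (ord3 j) => [->|->|->];
  rewrite /c2_3 /c3_3 /= ?mulr1 ?mulr0; ring.
Qed.

Lemma p2_3 (A : 'M[R]_3) : \tr (A^+2) = \tr A ^+ 2 - 2%:R * c2_3 A.
Proof.
rewrite /mxtrace !sum3 expr2 !mulE3 !sum3 /c2_3; ring.
Qed.

Lemma CH4 (A : 'M[R]_4) :
  A^+4 = \tr A *: A^+3 - c2_4 A *: A^+2 + c3_4 A *: A - (c4_4 A)%:M.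
Proof.
apply/matrixP => i j.
rewrite !exprS expr0 mulr1 !mxE.
do 4 rewrite ?sum4 ?mulE4.
rewrite /mxtrace !sum4.
by case: (ord4 i) => [->|[->|[->|->]]]; case: (ord4 j) => [->|[->|[->|->]]];
  rewrite /c2_4 /c3_4 /c4_4 /= ?mulr1 ?mulr0; ring.
Qed.

Lemma p2_4 (A : 'M[R]_4) : \tr (A^+2) = \tr A ^+ 2 - 2%:R * c2_4 A.
Proof.
rewrite /mxtrace !sum4 expr2 !mulE4 !sum4 /c2_4; ring.
Qed.

Lemma p3_4 (A : 'M[R]_4) :
  \tr (A^+3) = \tr A ^+ 3 - 3%:R * \tr A * c2_4 A + 3%:R * c3_4 A.
Proof.
rewrite !exprS expr0 mulr1 /mxtrace !sum4.
do 3 rewrite ?sum4 ?mulE4.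
rewrite /c2_4 /c3_4; ring.
Qed.

End Alg.

Section Nil.
Variable R : realType.

Lemma scM3 (c : R) (M : 'M[R]_3) : c%:M * M = c *: M.
Proof. by rewrite -mulmxE mul_scalar_mx. Qed.
Lemma scM4 (c : R) (M : 'M[R]_4) : c%:M * M = c *: M.
Proof. by rewrite -mulmxE mul_scalar_mx. Qed.

Lemma scal3 (c1 c2 c3 : R) :
  0 = c1 * (c1 ^+ 2 - 2 * c2) - c2 * c1 + c3 *+ 3 ->
  - (c2 * (c1 ^+ 2 - 2 * c2)) + c3 * c1 = 0 ->
  c3 * (c1 ^+ 2 - 2 * c2) = 0 -> c1 = 0 /\ c2 = 0 /\ c3 = 0.
Proof.
move=> t0 t1 t2.
have h3 : c3 = 0.
  case: (eqVneq c3 0) => // nz.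
  move/eqP: t2; rewrite mulf_eq0 (negbTE nz) /= => /eqP P2.
  have : c3 * c1 = 0 by rewrite P2 mulr0 in t1; lra.
  move/eqP; rewrite mulf_eq0 (negbTE nz) /= => /eqP c10.
  have c20 : c2 = 0 by rewrite c10 in P2; lra.
  have : c3 * 3%:R = 0 by rewrite P2 c10 c20 in t0; lra.
  move/eqP; rewrite mulf_eq0 (negbTE nz) /= pnatr_eq0 //.
have h2 : c2 = 0.
  case: (eqVneq c2 0) => // nz.
  have : c2 * (c1 ^+ 2 - 2 * c2) = 0 by rewrite h3 in t1; lra.
  move/eqP; rewrite mulf_eq0 (negbTE nz) /= => /eqP P2.
  have : c2 * c1 = 0 by rewrite P2 h3 in t0; lra.
  move/eqP; rewrite mulf_eq0 (negbTE nz) /= => /eqP c10.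
  rewrite c10 in P2; lra.
subst c2 c3.
suff : c1 ^+ 3 = 0 by move/eqP; rewrite expf_eq0 /= => /eqP.
rewrite exprS expr2; lra.
Qed.

Lemma nil3 (A : 'M[R]_3) : A^+3 = 0 ->
  \tr A = 0 /\ c2_3 A = 0 /\ c3_3 A = 0.
Proof.
move=> H3.
have H4 : A^+4 = 0 by rewrite exprS H3 mulr0.
have H5 : A^+5 = 0 by rewrite exprS H4 mulr0.
have E := CH3 A; rewrite H3 in E.
set c1 := \tr A in E *; set c2 := c2_3 A in E *; set c3 := c3_3 A in E *.
have p2 := p2_3 A; rewrite -/c1 -/c2 in p2.
have E1 : c1 *: A^+3 - c2 *: A^+2 + c3 *: A = 0.
  have -> : c1 *: A^+3 - c2 *: A^+2 + c3 *: A = (c1 *: A^+2 - c2 *: A + c3%:M) * A.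
    by rewrite !mulrDl mulNr !scalerAl scM3 ?exprS ?expr0 ?mulr1 ?mulrA.
  by rewrite -E mul0r.
have E2 : c1 *: A^+4 - c2 *: A^+3 + c3 *: A^+2 = 0.
  have -> : c1 *: A^+4 - c2 *: A^+3 + c3 *: A^+2 = (c1 *: A^+2 - c2 *: A + c3%:M) * A^+2.
    by rewrite !mulrDl mulNr !scalerAl scM3 ?exprS ?expr0 ?mulr1 ?mulrA ?scalerAl.
  by rewrite -E mul0r.
rewrite H3 scaler0 add0r in E1.
rewrite H4 H3 !scaler0 subr0 add0r in E2.
have t0 := congr1 mxtrace E; have t1 := congr1 mxtrace E1; have t2 := congr1 mxtrace E2.
rewrite !linearD !linearN !linearZ /= mxtrace_scalar mxtrace0 in t0.
rewrite !linearD !linearN !linearZ /= mxtrace0 in t1.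
rewrite !linearZ /= mxtrace0 in t2.
rewrite p2 -/c1 in t0 t1 t2.
exact: scal3.
Qed.

Lemma scal4 (c1 c2 c3 c4 : R) :
  let p2 := c1 ^+ 2 - 2 * c2 in
  let p3 := c1 ^+ 3 - 3 * c1 * c2 + 3 * c3 in
  c1 * p3 - c2 * p2 + c3 * c1 - 4 * c4 = 0 ->
  - c2 * p3 + c3 * p2 - c4 * c1 = 0 ->
  c3 * p3 - c4 * p2 = 0 ->
  c4 * p3 = 0 -> c1 = 0 /\ c2 = 0 /\ c3 = 0 /\ c4 = 0.
Proof.
move=> p2 p3 t0 t1 t2 t3.
have h4 : c4 = 0.
  case: (eqVneq c4 0) => // nz.
  move/eqP: t3; rewrite mulf_eq0 (negbTE nz) /= => /eqP P3.
  have : c4 * p2 = 0 by rewrite P3 in t2; lra.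
  move/eqP; rewrite mulf_eq0 (negbTE nz) /= => /eqP P2.
  have : c4 * c1 = 0 by rewrite P3 P2 in t1; lra.
  move/eqP; rewrite mulf_eq0 (negbTE nz) /= => /eqP c10.
  have c20 : c2 = 0 by move: P2; rewrite /p2 c10; lra.
  have c30 : c3 = 0 by move: P3; rewrite /p3 c10 c20; lra.
  have : c4 * 4%:R = 0 by rewrite P3 P2 c10 c30 in t0; lra.
  move/eqP; rewrite mulf_eq0 (negbTE nz) /= pnatr_eq0 //.
subst c4.
have h3 : c3 = 0.
  case: (eqVneq c3 0) => // nz.
  have : c3 * p3 = 0 by lra.
  move/eqP; rewrite mulf_eq0 (negbTE nz) /= => /eqP P3.
  have : c3 * p2 = 0 by rewrite P3 in t1; lra.
  move/eqP; rewrite mulf_eq0 (negbTE nz) /= => /eqP P2.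
  have : c3 * c1 = 0 by rewrite P3 P2 in t0; lra.
  move/eqP; rewrite mulf_eq0 (negbTE nz) /= => /eqP c10.
  have c20 : c2 = 0 by move: P2; rewrite /p2 c10; lra.
  by move: P3; rewrite /p3 c10 c20; lra.
subst c3.
have h2 : c2 = 0.
  case: (eqVneq c2 0) => // nz.
  have : c2 * p3 = 0 by lra.
  move/eqP; rewrite mulf_eq0 (negbTE nz) /= => /eqP P3.
  have : c2 * p2 = 0 by rewrite P3 in t0; lra.
  move/eqP; rewrite mulf_eq0 (negbTE nz) /= => /eqP P2.
  have : c1 * c2 = 0.
    move: P3 P2; rewrite /p3 /p2 => P3 P2.
    have e : c1 ^+ 2 = 2 * c2 by lra.
    have : c1 ^+ 3 = 2 * c1 * c2 by rewrite exprS e; lra.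
    lra.
  move/eqP; rewrite mulf_eq0 (negbTE nz) orbF => /eqP c10.
  by move: P2; rewrite /p2 c10; lra.
subst c2.
suff : c1 ^+ 4 = 0 by move/eqP; rewrite expf_eq0 /= => /eqP.
move: t0; rewrite /p3 /p2 => t0.
have -> : c1 ^+ 4 = c1 * c1 ^+ 3 by rewrite exprS.
lra.
Qed.

Lemma nil4 (A : 'M[R]_4) : A^+4 = 0 ->
  \tr A = 0 /\ c2_4 A = 0 /\ c3_4 A = 0 /\ c4_4 A = 0.
Proof.
move=> H4.
have H5 : A^+5 = 0 by rewrite exprS H4 mulr0.
have H6 : A^+6 = 0 by rewrite exprS H5 mulr0.
have E := CH4 A; rewrite H4 in E.
set c1 := \tr A in E *; set c2 := c2_4 A in E *; set c3 := c3_4 A in E *;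
  set c4 := c4_4 A in E *.
have p2 := p2_4 A; have p3 := p3_4 A; rewrite -/c1 -/c2 -/c3 in p2 p3.
have E1 : c1 *: A^+4 - c2 *: A^+3 + c3 *: A^+2 - c4 *: A = 0.
  have -> : c1 *: A^+4 - c2 *: A^+3 + c3 *: A^+2 - c4 *: A =
    (c1 *: A^+3 - c2 *: A^+2 + c3 *: A - c4%:M) * A.
    by rewrite !mulrDl !mulNr !scalerAl scM4 ?exprS ?expr0 ?mulr1 ?mulrA ?scalerAl.
  by rewrite -E mul0r.
have E2 : c1 *: A^+5 - c2 *: A^+4 + c3 *: A^+3 - c4 *: A^+2 = 0.
  have -> : c1 *: A^+5 - c2 *: A^+4 + c3 *: A^+3 - c4 *: A^+2 =
    (c1 *: A^+3 - c2 *: A^+2 + c3 *: A - c4%:M) * A^+2.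
    by rewrite !mulrDl !mulNr !scalerAl scM4 ?exprS ?expr0 ?mulr1 ?mulrA ?scalerAl.
  by rewrite -E mul0r.
have E3 : c1 *: A^+6 - c2 *: A^+5 + c3 *: A^+4 - c4 *: A^+3 = 0.
  have -> : c1 *: A^+6 - c2 *: A^+5 + c3 *: A^+4 - c4 *: A^+3 =
    (c1 *: A^+3 - c2 *: A^+2 + c3 *: A - c4%:M) * A^+3.
    by rewrite !mulrDl !mulNr !scalerAl scM4 ?exprS ?expr0 ?mulr1 ?mulrA ?scalerAl.
  by rewrite -E mul0r.
rewrite H4 ?scaler0 in E1.
rewrite H5 H4 ?scaler0 in E2.
rewrite H6 H5 H4 ?scaler0 in E3.
have t0 := congr1 mxtrace E; have t1 := congr1 mxtrace E1;
  have t2 := congr1 mxtrace E2; have t3 := congr1 mxtrace E3.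
rewrite !linearD ?linearN !linearZ /= mxtrace_scalar mxtrace0 in t0.
rewrite !linearD ?linearN !linearZ /= mxtrace0 in t1.
rewrite ?linearD ?linearN !linearZ /= mxtrace0 in t2.
rewrite ?linearD ?linearN !linearZ /= mxtrace0 in t3.
rewrite p2 p3 -/c1 in t0 t1 t2 t3.
apply: scal4 => /=; lra.
Qed.
End Nil.

Lemma nilp_pow (F : fieldType) n (A : 'M[F]_n.+1) k : A^+k = 0 -> A^+n.+1 = 0.
Proof.
move=> Hk.
have hX : horner_mx A ('X^k) = 0 by rewrite rmorphXn /= horner_mx_X Hk.
have : mxminpoly A %| ('X - 0%:P)^+k by rewrite polyC0 subr0; exact: mxminpoly_min.
case/dvdp_exp_XsubCP => m lemk; rewrite polyC0 subr0 => Hm.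
have eqm : mxminpoly A = 'X^m.
  by apply/eqP; rewrite -eqp_monic // ?mxminpoly_monic ?monicXn.
have sz : (m <= n.+1)%N.
  have := dvdp_leq (monic_neq0 (char_poly_monic A)) (mxminpoly_dvd_char A).
  by rewrite eqm size_polyXn size_char_poly.
have root := mx_root_minpoly A; rewrite eqm rmorphXn /= horner_mx_X in root.
have e := exprD A (n.+1 - m) m; rewrite subnK // in e.
by rewrite e root mulr0.
Qed.

Lemma sw0 : sw o0 = o1. Proof. by []. Qed.
Lemma sw1 : sw o1 = o0. Proof. by []. Qed.
Lemma sw2 : sw o2 = o2. Proof. by []. Qed.
Lemma sw3 : sw o3 = o3. Proof. by []. Qed.
Lemma sw4 : sw o4 = o4. Proof. by []. Qed.

Definition pa (k : 'I_4) : 'I_5 :=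
  match val k with 0 => o0 | 1 => o2 | 2 => o2 | _ => o3 end.
Definition pb (k : 'I_4) : 'I_5 :=
  match val k with 0 => o1 | 1 => o3 | 2 => o4 | _ => o4 end.

Section W.
Variable R : realType.
Variable C : 'I_5 -> 'I_5 -> 'I_5 -> 'I_5 -> R.
Hypothesis Ha : forall a b c d, C a b c d = - C b a c d.
Hypothesis Hb : forall a b c d, C a b c d = - C a b d c.
Hypothesis Hpos : forall a b c d, (0 < bw a b c d)%R -> C a b c d = 0.

Definition pm (G : 'M[R]_5) : 'cV[R]_3 := \col_i G o1 (sp i).
Definition pp (G : 'M[R]_5) : 'cV[R]_3 := \col_i G o0 (sp i).
Definition p0 (G : 'M[R]_5) : 'cV[R]_4 := \col_k G (pa k) (pb k).
Definition Phi : 'M[R]_3 := \matrix_(i, j) C o0 (sp i) o1 (sp j).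
Definition Bp : 'M[R]_3 := \matrix_(i, j) C o1 (sp i) o0 (sp j).
Definition B0 : 'M[R]_4 := \matrix_(k, l) C (sw (pa k)) (sw (pb k)) (pa l) (pb l).

Ltac kill := repeat match goal with |- context[C ?a ?b ?c ?d] =>
  rewrite (@Hpos a b c d); [|by []] end.
Ltac simpC := rewrite ?sp0 ?sp1 ?sp2 ?sw0 ?sw1 ?sw2 ?sw3 ?sw4; kill;
  rewrite ?(Cdiag1 Ha) ?(Cdiag2 Hb).

Lemma antiE (G : 'M[R]_5) : G^T = - G -> forall x y, G y x = - G x y.
Proof. by move=> HG x y; have := congr1 (fun M : 'M[R]_5 => M x y) HG; rewrite !mxE. Qed.

Lemma stepm (G : 'M[R]_5) : G^T = - G -> pm (weylOp C G) = Phi *m pm G.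
Proof.
move=> HG; apply/matrixP => i j; rewrite [LHS]mxE (Tsum Hb _ _ HG) !mxE sum3 !mxE.
case: (ord3 i) => ->; simpC; ring.
Qed.


Lemma paE : [/\ pa r0 = o0, pa r1 = o2, pa r2 = o2 & pa r3 = o3]. Proof. by []. Qed.
Lemma pbE : [/\ pb r0 = o1, pb r1 = o3, pb r2 = o4 & pb r3 = o4]. Proof. by []. Qed.

Lemma col0 (v : 'cV[R]_3) i : v = 0 -> v i 0 = 0.
Proof. by move=> ->; rewrite mxE. Qed.
Lemma col04 (v : 'cV[R]_4) i : v = 0 -> v i 0 = 0.
Proof. by move=> ->; rewrite mxE. Qed.

Lemma step0 (G : 'M[R]_5) : G^T = - G -> pm G = 0 -> p0 (weylOp C G) = B0 *m p0 G.
Proof.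
move=> HG Hm.
have z1 := col0 q0 Hm; have z2 := col0 q1 Hm; have z3 := col0 q2 Hm.
rewrite !mxE sp0 sp1 sp2 in z1 z2 z3.
case: paE => pa0 pa1 pa2 pa3; case: pbE => pb0 pb1 pb2 pb3.
apply/matrixP => k j; rewrite [LHS]mxE (Tsum Hb _ _ HG) !mxE sum4 !mxE.
rewrite pa0 pa1 pa2 pa3 pb0 pb1 pb2 pb3 z1 z2 z3.
case: (ord4 k) => [->|[->|[->|->]]]; rewrite ?pa0 ?pa1 ?pa2 ?pa3 ?pb0 ?pb1 ?pb2 ?pb3;
  simpC; ring.
Qed.

Lemma stepp (G : 'M[R]_5) : G^T = - G -> pm G = 0 -> p0 G = 0 ->
  pp (weylOp C G) = Bp *m pp G.
Proof.
move=> HG Hm H0.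
have z1 := col0 q0 Hm; have z2 := col0 q1 Hm; have z3 := col0 q2 Hm.
rewrite !mxE sp0 sp1 sp2 in z1 z2 z3.
have y0 := col04 r0 H0; have y1 := col04 r1 H0; have y2 := col04 r2 H0;
  have y3 := col04 r3 H0.
rewrite !mxE in y0 y1 y2 y3.
case: paE => pa0 pa1 pa2 pa3; case: pbE => pb0 pb1 pb2 pb3.
rewrite pa0 pb0 in y0; rewrite pa1 pb1 in y1; rewrite pa2 pb2 in y2; rewrite pa3 pb3 in y3.
apply/matrixP => i j; rewrite [LHS]mxE (Tsum Hb _ _ HG) !mxE sum3 !mxE.
rewrite z1 z2 z3 y0 y1 y2 y3.
case: (ord3 i) => ->; simpC; ring.
Qed.

Lemma Tanti (G : 'M[R]_5) : (weylOp C G)^T = - weylOp C G.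
Proof.
apply/matrixP => a b; rewrite !mxE -mulrN -sumrN; congr (_ * _).
apply: eq_bigr => c _; rewrite -sumrN; apply: eq_bigr => d _.
by rewrite !CupE (Ha (sw b)) mulNr.
Qed.

Lemma zeroG (G : 'M[R]_5) : G^T = - G -> pm G = 0 -> p0 G = 0 -> pp G = 0 -> G = 0.
Proof.
move=> HG Hm H0 Hp.
have z1 := col0 q0 Hm; have z2 := col0 q1 Hm; have z3 := col0 q2 Hm.
have x1 := col0 q0 Hp; have x2 := col0 q1 Hp; have x3 := col0 q2 Hp.
rewrite !mxE sp0 sp1 sp2 in z1 z2 z3 x1 x2 x3.
have y0 := col04 r0 H0; have y1 := col04 r1 H0; have y2 := col04 r2 H0;
  have y3 := col04 r3 H0.
rewrite !mxE in y0 y1 y2 y3.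
case: paE => pa0 pa1 pa2 pa3; case: pbE => pb0 pb1 pb2 pb3.
rewrite pa0 pb0 in y0; rewrite pa1 pb1 in y1; rewrite pa2 pb2 in y2; rewrite pa3 pb3 in y3.
have Gd : forall x, G x x = 0 by move=> x; have := antiE HG x x; lra.
apply/matrixP => a b; rewrite [RHS]mxE.
case: (ord5 a) => [->|[->|[->|[->|->]]]]; case: (ord5 b) => [->|[->|[->|[->|->]]]];
  first [ by rewrite Gd
        | by rewrite ?z1 ?z2 ?z3 ?x1 ?x2 ?x3 ?y0 ?y1 ?y2 ?y3
        | by rewrite (antiE HG) ?z1 ?z2 ?z3 ?x1 ?x2 ?x3 ?y0 ?y1 ?y2 ?y3 oppr0 ].
Qed.

Lemma anti_iter (G : 'M[R]_5) k : G^T = - G -> (iter k (weylOp C) G)^T = - iter k (weylOp C) G.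
Proof. by move=> HG; case: k => [|k] //=; exact: Tanti. Qed.

Lemma iterm (G : 'M[R]_5) k : G^T = - G -> pm (iter k (weylOp C) G) = Phi^+k *m pm G.
Proof.
move=> HG; elim: k => [|k IH]; first by rewrite expr0 mul1mx.
by rewrite iterS stepm ?anti_iter // IH mulmxA exprS.
Qed.

Lemma iter0 (G : 'M[R]_5) k : G^T = - G -> pm G = 0 ->
  p0 (iter k (weylOp C) G) = B0^+k *m p0 G.
Proof.
move=> HG Hm; elim: k => [|k IH]; first by rewrite expr0 mul1mx.
rewrite iterS step0 ?anti_iter // ?IH ?mulmxA ?exprS //.
by rewrite iterm // Hm mulmx0.
Qed.

Lemma iterp (G : 'M[R]_5) k : G^T = - G -> pm G = 0 -> p0 G = 0 ->
  pp (iter k (weylOp C) G) = Bp^+k *m pp G.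
Proof.
move=> HG Hm H0; elim: k => [|k IH]; first by rewrite expr0 mul1mx.
rewrite iterS stepp ?anti_iter // ?IH ?mulmxA ?exprS //.
  by rewrite iterm // Hm mulmx0.
by rewrite iter0 // H0 mulmx0.
Qed.


Lemma conv : Phi^+3 = 0 -> B0^+4 = 0 -> Bp^+3 = 0 -> weyl_nilpotent C.
Proof.
move=> N1 N0 Np; exists 10%N => F HF.
have -> : iter 10 (weylOp C) F =
  iter 3 (weylOp C) (iter 4 (weylOp C) (iter 3 (weylOp C) F)) by rewrite -!iterD.
set G1 := iter 3 (weylOp C) F.
have A1 : G1^T = - G1 by exact: anti_iter.
have M1 : pm G1 = 0 by rewrite /G1 iterm // N1 mul0mx.
set G2 := iter 4 (weylOp C) G1.
have A2 : G2^T = - G2 by exact: anti_iter.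
have M2 : pm G2 = 0 by rewrite /G2 iterm // M1 mulmx0.
have Z2 : p0 G2 = 0 by rewrite /G2 iter0 // N0 mul0mx.
apply: zeroG; first exact: anti_iter.
- by rewrite iterm // M2 mulmx0.
- by rewrite iter0 // Z2 mulmx0.
- by rewrite iterp // Np mul0mx.
Qed.

Lemma col_zero n (A : 'M[R]_n) : (forall j, A *m (delta_mx j 0 : 'cV[R]_n) = 0) -> A = 0.
Proof.
move=> H; apply/matrixP => i j.
have := congr1 (fun v : 'cV[R]_n => v i 0) (H j).
by rewrite -colE !mxE.
Qed.

Lemma fwd : weyl_nilpotent C -> Phi^+3 = 0 /\ B0^+4 = 0.
Proof.
case=> k Hk; split.
  apply: (@nilp_pow _ 2 _ k); apply: col_zero => j.
  pose F := delta_mx o1 (sp j) - delta_mx (sp j) o1 : 'M[R]_5.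
  have HF : F^T = - F by rewrite /F linearB /= !trmx_delta opprB.
  have e : pm F = delta_mx j 0.
    apply/matrixP => i l; rewrite !mxE (ord1 l) /=.
    by case: (ord3 i) => ->; case: (ord3 j) => ->; rewrite ?sp0 ?sp1 ?sp2 -?val_eqE /= ?subr0.
  by rewrite -e -(iterm k HF) (Hk F HF) /pm; apply/matrixP => i l; rewrite !mxE.
apply: (@nilp_pow _ 3 _ k); apply: col_zero => j.
pose F := delta_mx (pa j) (pb j) - delta_mx (pb j) (pa j) : 'M[R]_5.
have HF : F^T = - F by rewrite /F linearB /= !trmx_delta opprB.
have em : pm F = 0.
  apply/matrixP => i l; rewrite !mxE.
  by case: (ord3 i) => ->; case: (ord4 j) => [->|[->|[->|->]]]; rewrite ?sp0 ?sp1 ?sp2 -?val_eqE /= ?subr0.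
have e : p0 F = delta_mx j 0.
  apply/matrixP => i l; rewrite !mxE (ord1 l) /=.
  by case: (ord4 i) => [->|[->|[->|->]]]; case: (ord4 j) => [->|[->|[->|->]]]; rewrite -?val_eqE /= ?subr0.
by rewrite -e -(iter0 k HF em) (Hk F HF) /p0; apply/matrixP => i l; rewrite !mxE.
Qed.

End W.

Section Nice.
Variable R : realType.
Variables h0 h1 h2 w0 w1 w2 : R.
Definition nP1 := h0 + h1 + h2.
Definition nP2 := h0 * h1 + h0 * h2 + h1 * h2 + w0 ^+ 2 + w1 ^+ 2 + w2 ^+ 2.
Definition nP3 := h0 * h1 * h2 + h0 * w0 ^+ 2 + h1 * w1 ^+ 2 + h2 * w2 ^+ 2.
Definition tt := (h0 + h1 + h2) / 2%:R.
Definition k0 := tt - h0.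
Definition k1 := tt - h1.
Definition k2 := tt - h2.
Definition nB2 := tt * (k0 + k1 + k2) + k0 * k1 + k0 * k2 + k1 * k2 + w0 ^+ 2 + w1 ^+ 2 + w2 ^+ 2.
Definition nB3 := tt * (k0 * k1 + k0 * k2 + k1 * k2) + k0 * k1 * k2 +
  w0 ^+ 2 * (k1 + k2) + w1 ^+ 2 * (k0 + k2) + w2 ^+ 2 * (k0 + k1).
Definition nB4 := tt * k0 * k1 * k2 + w0 ^+ 2 * k1 * k2 + w1 ^+ 2 * k0 * k2 + w2 ^+ 2 * k0 * k1.
End Nice.

Section S.
Variable R : realType.
Variable C : 'I_5 -> 'I_5 -> 'I_5 -> 'I_5 -> R.
Hypothesis Ha : forall a b c d, C a b c d = - C b a c d.
Hypothesis Hb : forall a b c d, C a b c d = - C a b d c.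
Hypothesis Hs : forall a b c d, C a b c d = C c d a b.
Hypothesis Hbi : forall a b c d, C a b c d + C a c d b + C a d b c = 0.
Hypothesis Htr : forall b d, \sum_(a < 5) \sum_(c < 5) Defs.eta R a c * C a b c d = 0.
Hypothesis Hpos : forall a b c d, (0 < bw a b c d)%R -> C a b c d = 0.
Hypothesis Hoff : forall i j : 'I_3, i != j -> Hm C i j = 0.

Lemma tr5 b d : C o0 b o1 d + C o1 b o0 d + C o2 b o2 d + C o3 b o3 d + C o4 b o4 d = 0.
Proof.
have := Htr b d.
under eq_bigr => a _ do rewrite (sum_eta a (fun c => C a b c d)).
by rewrite sum5 sw0 sw1 sw2 sw3 sw4.
Qed.

Lemma HmE i j : Hm C i j = C o2 (sp i) o2 (sp j) + C o3 (sp i) o3 (sp j) + C o4 (sp i) o4 (sp j).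
Proof. by rewrite /Hm sum3 sp0 sp1 sp2. Qed.

Lemma PhiGen i j : 2%:R * C o0 (sp i) o1 (sp j) = - Hm C i j + C o0 o1 (sp i) (sp j).
Proof.
have t := tr5 (sp i) (sp j).
have b := Hbi o0 o1 (sp i) (sp j).
rewrite (Hb o0 (sp i) (sp j) o1) in b.
rewrite (Hs o1 (sp i) o0 (sp j)) in t.
rewrite HmE; lra.
Qed.

Definition h (i : 'I_3) := Hm C i i.
Definition w0 := C o0 o1 o3 o4.
Definition w1 := C o0 o1 o4 o2.
Definition w2 := C o0 o1 o2 o3.

Lemma Hoff01 : Hm C q0 q1 = 0. Proof. exact: Hoff. Qed.
Lemma Hoff02 : Hm C q0 q2 = 0. Proof. exact: Hoff. Qed.
Lemma Hoff12 : Hm C q1 q2 = 0. Proof. exact: Hoff. Qed.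
Lemma Hoff10 : Hm C q1 q0 = 0. Proof. exact: Hoff. Qed.
Lemma Hoff20 : Hm C q2 q0 = 0. Proof. exact: Hoff. Qed.
Lemma Hoff21 : Hm C q2 q1 = 0. Proof. exact: Hoff. Qed.

Lemma PhiEnt :
  (Phi C q0 q0 = - h q0 / 2%:R /\ Phi C q0 q1 = w2 / 2%:R /\ Phi C q0 q2 = - w1 / 2%:R) /\
  (Phi C q1 q0 = - w2 / 2%:R /\ Phi C q1 q1 = - h q1 / 2%:R /\ Phi C q1 q2 = w0 / 2%:R) /\
  (Phi C q2 q0 = w1 / 2%:R /\ Phi C q2 q1 = - w0 / 2%:R /\ Phi C q2 q2 = - h q2 / 2%:R).
Proof.
have E : forall i j, Phi C i j = (- Hm C i j + C o0 o1 (sp i) (sp j)) / 2%:R.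
  by move=> i j; rewrite mxE -PhiGen; field.
rewrite !E /h !sp0 !sp1 !sp2 Hoff01 Hoff02 Hoff12 Hoff10 Hoff20 Hoff21 !(Cdiag2 Hb) /w0 /w1 /w2.
rewrite (Hb o0 o1 o2 o4) (Hb o0 o1 o3 o2) (Hb o0 o1 o4 o3).
by repeat split; field.
Qed.


Lemma cPhiE :
  \tr (Phi C) = - nP1 (h q0) (h q1) (h q2) / 2%:R /\
  c2_3 (Phi C) = nP2 (h q0) (h q1) (h q2) w0 w1 w2 / 4%:R /\
  c3_3 (Phi C) = - nP3 (h q0) (h q1) (h q2) w0 w1 w2 / 8%:R.
Proof.
have [[e00 [e01 e02]] [[e10 [e11 e12]] [e20 [e21 e22]]]] := PhiEnt.
rewrite /mxtrace sum3 /c2_3 /c3_3 e00 e01 e02 e10 e11 e12 e20 e21 e22 /nP1 /nP2 /nP3.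
by repeat split; field.
Qed.

Lemma diagPhi i : C o0 (sp i) o1 (sp i) = - h i / 2%:R.
Proof. have := PhiGen i i; rewrite (Cdiag2 Hb) /h => e; lra. Qed.

Lemma B0Ent :
  let hh0 := h q0 in let hh1 := h q1 in let hh2 := h q2 in
  let t := tt hh0 hh1 hh2 in
  (B0 C r0 r0 = t /\ B0 C r0 r1 = - w2 /\ B0 C r0 r2 = w1 /\ B0 C r0 r3 = - w0) /\
  (B0 C r1 r0 = w2 /\ B0 C r1 r1 = k2 hh0 hh1 hh2 /\ B0 C r1 r2 = 0 /\ B0 C r1 r3 = 0) /\
  (B0 C r2 r0 = - w1 /\ B0 C r2 r1 = 0 /\ B0 C r2 r2 = k1 hh0 hh1 hh2 /\ B0 C r2 r3 = 0) /\
  (B0 C r3 r0 = w0 /\ B0 C r3 r1 = 0 /\ B0 C r3 r2 = 0 /\ B0 C r3 r3 = k0 hh0 hh1 hh2).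
Proof.
move=> hh0 hh1 hh2 t.
case: paE => pa0 pa1 pa2 pa3; case: pbE => pb0 pb1 pb2 pb3.
rewrite /B0 !mxE pa0 pa1 pa2 pa3 pb0 pb1 pb2 pb3 sw0 sw1 sw2 sw3 sw4.
clear pa0 pa1 pa2 pa3 pb0 pb1 pb2 pb3.
have d0 := diagPhi q0; have d1 := diagPhi q1; have d2 := diagPhi q2.
rewrite sp0 in d0; rewrite sp1 in d1; rewrite sp2 in d2.
have T := tr5 o0 o1; rewrite (Cdiag1 Ha) in T.
have c2 : C o2 o0 o2 o1 = C o0 o2 o1 o2 by rewrite Ha Hb opprK.
have c3 : C o3 o0 o3 o1 = C o0 o3 o1 o3 by rewrite Ha Hb opprK.
have c4 : C o4 o0 o4 o1 = C o0 o4 o1 o4 by rewrite Ha Hb opprK.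
have H0 := HmE q0 q0; have H1 := HmE q1 q1; have H2 := HmE q2 q2.
have H01 := HmE q0 q1; have H02 := HmE q0 q2; have H12 := HmE q1 q2.
rewrite Hoff01 in H01; rewrite Hoff02 in H02; rewrite Hoff12 in H12.
rewrite !sp0 !sp1 !sp2 !(Cdiag1 Ha) !(Cdiag2 Hb) in H0 H1 H2 H01 H02 H12.
have s32 : C o3 o2 o3 o2 = C o2 o3 o2 o3 by rewrite Ha Hb opprK.
have s42 : C o4 o2 o4 o2 = C o2 o4 o2 o4 by rewrite Ha Hb opprK.
have s43 : C o4 o3 o4 o3 = C o3 o4 o3 o4 by rewrite Ha Hb opprK.
have x1 : C o3 o2 o3 o4 = - C o2 o3 o3 o4 by rewrite Ha.
have x2 : C o4 o2 o4 o3 = C o2 o4 o3 o4 by rewrite Ha Hb opprK.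
rewrite /t /k0 /k1 /k2 /tt /hh0 /hh1 /hh2 /h /w0 /w1 /w2.
rewrite /h in d0 d1 d2.
rewrite (Hs o2 o3 o0 o1) (Hs o2 o4 o0 o1) (Hs o3 o4 o0 o1).
rewrite (Hs o2 o4 o2 o3) (Hs o3 o4 o2 o3) (Hs o3 o4 o2 o4).
rewrite (Ha o1 o0 o2 o3) (Ha o1 o0 o2 o4) (Ha o1 o0 o3 o4).
rewrite (Hb o0 o1 o2 o4).
repeat split; try field; try lra.
Qed.

Lemma cB0E :
  let hh0 := h q0 in let hh1 := h q1 in let hh2 := h q2 in
  \tr (B0 C) = tt hh0 hh1 hh2 + k0 hh0 hh1 hh2 + k1 hh0 hh1 hh2 + k2 hh0 hh1 hh2 /\
  c2_4 (B0 C) = nB2 hh0 hh1 hh2 w0 w1 w2 /\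
  c3_4 (B0 C) = nB3 hh0 hh1 hh2 w0 w1 w2 /\
  c4_4 (B0 C) = nB4 hh0 hh1 hh2 w0 w1 w2.
Proof.
move=> hh0 hh1 hh2.
have [[e00 [e01 [e02 e03]]] [[e10 [e11 [e12 e13]]] [[e20 [e21 [e22 e23]]] [e30 [e31 [e32 e33]]]]]]
  := B0Ent.
rewrite /mxtrace sum4 /c2_4 /c3_4 /c4_4 e00 e01 e02 e03 e10 e11 e12 e13 e20 e21 e22 e23
  e30 e31 e32 e33 /nB2 /nB3 /nB4.
by repeat split; ring.
Qed.

Lemma BpPhi i j : Bp C i j = Phi C j i.
Proof. by rewrite !mxE Hs. Qed.

Lemma cBpE : \tr (Bp C) = \tr (Phi C) /\ c2_3 (Bp C) = c2_3 (Phi C) /\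
  c3_3 (Bp C) = c3_3 (Phi C).
Proof.
rewrite /mxtrace !sum3 /c2_3 /c3_3 !BpPhi.
by repeat split; ring.
Qed.

End S.

Section Scal.
Variable R : realType.

Lemma sq0 (x : R) : x ^+ 2 = 0 -> x = 0.
Proof. by move/eqP; rewrite expf_eq0 /= => /eqP. Qed.

Lemma case_b (hb ha hc wb wa wc : R) : hb = 0 -> ha + hc = 0 ->
  ha * hc + wa ^+ 2 + wb ^+ 2 + wc ^+ 2 = 0 ->
  wb ^+ 2 * ha * hc = 0 -> ha * wa ^+ 2 + hc * wc ^+ 2 = 0 ->
  ~ (hb = 0 /\ ha = 0 /\ hc = 0 /\ wb = 0 /\ wa = 0 /\ wc = 0) ->
  wb = 0 /\ ha = - hc /\ hc != 0 /\ 2%:R * wa ^+ 2 = hc ^+ 2 /\ 2%:R * wc ^+ 2 = hc ^+ 2.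
Proof.
move=> hb0 sac E2 F4 G nd.
have ea : ha = - hc by lra.
rewrite ea in E2 F4 G.
have pa := sqr_ge0 wa; have pb := sqr_ge0 wb; have pc := sqr_ge0 wc.
case: (eqVneq hc 0) => [hc0|hcn].
  exfalso; apply: nd; rewrite hb0 ea hc0 oppr0.
  rewrite hc0 !mulr0 add0r in E2.
  have ea2 : wa ^+ 2 = 0 by lra.
  have eb2 : wb ^+ 2 = 0 by lra.
  have ec2 : wc ^+ 2 = 0 by lra.
  by rewrite (sq0 ea2) (sq0 eb2) (sq0 ec2).
have hc2 : hc ^+ 2 != 0 by rewrite expf_eq0.
have wb0 : wb = 0.
  apply: sq0; have : wb ^+ 2 * (hc ^+ 2) = 0 by rewrite expr2; lra.
  by move/eqP; rewrite mulf_eq0 (negbTE hc2) orbF => /eqP.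
split => //; split => //; split => //.
have eqw : wa ^+ 2 = wc ^+ 2.
  have : hc * (wc ^+ 2 - wa ^+ 2) = 0 by lra.
  move/eqP; rewrite mulf_eq0 (negbTE hcn) /= subr_eq0 => /eqP //.
rewrite wb0 in E2.
have e : hc ^+ 2 = hc * hc by rewrite expr2.
split; lra.
Qed.


Lemma fwd_scalar (a0 a1 a2 v0 v1 v2 : R) :
  nP1 a0 a1 a2 = 0 -> nP2 a0 a1 a2 v0 v1 v2 = 0 -> nP3 a0 a1 a2 v0 v1 v2 = 0 ->
  nB3 a0 a1 a2 v0 v1 v2 = 0 -> nB4 a0 a1 a2 v0 v1 v2 = 0 ->
  ~ (a0 = 0 /\ a1 = 0 /\ a2 = 0 /\ v0 = 0 /\ v1 = 0 /\ v2 = 0) ->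
  (a0 = 0 /\ v0 = 0 /\ a1 = - a2 /\ a2 != 0 /\ 2%:R * v1 ^+ 2 = a2 ^+ 2 /\ 2%:R * v2 ^+ 2 = a2 ^+ 2) \/
  (a1 = 0 /\ v1 = 0 /\ a0 = - a2 /\ a2 != 0 /\ 2%:R * v0 ^+ 2 = a2 ^+ 2 /\ 2%:R * v2 ^+ 2 = a2 ^+ 2) \/
  (a2 = 0 /\ v2 = 0 /\ a0 = - a1 /\ a1 != 0 /\ 2%:R * v0 ^+ 2 = a1 ^+ 2 /\ 2%:R * v1 ^+ 2 = a1 ^+ 2).
Proof.
rewrite /nP1 /nP2 /nP3 /nB3 /nB4 /k0 /k1 /k2 /tt => S P2 P3 B3 B4 nd.
have e2 : a2 = - (a0 + a1) by lra.
subst a2.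
have X : a0 * (a1 * (a0 + a1)) = 0 by lra.
have Y : a0 * v0 ^+ 2 + a1 * v1 ^+ 2 - (a0 + a1) * v2 ^+ 2 = 0 by lra.
move/eqP: X; rewrite mulf_eq0 => /orP [/eqP a00|].
  left; subst a0.
  have [x [y [z [u v]]]] := @case_b 0 a1 (- (0 + a1)) v0 v1 v2 erefl
    ltac:(lra) ltac:(lra) ltac:(lra) ltac:(lra) nd.
  by do !split => //.
rewrite mulf_eq0 => /orP [/eqP a10|/eqP a01].
  right; left; subst a1.
  have nd' : ~ ((0 : R) = 0 /\ a0 = 0 /\ - (a0 + 0) = 0 /\ v1 = 0 /\ v0 = 0 /\ v2 = 0).
    move=> H; apply: nd; destruct H as (H0 & H1 & H2 & H3 & H4 & H5); do !split => //.
  have [x [y [z [u v]]]] := @case_b 0 a0 (- (a0 + 0)) v1 v0 v2 erefl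
    ltac:(lra) ltac:(lra) ltac:(lra) ltac:(lra) nd'.
  by do !split => //.
right; right.
have ea1 : a1 = - a0 by lra.
subst a1.
have nd' : ~ (- (a0 + - a0) = 0 /\ a0 = 0 /\ - a0 = 0 /\ v2 = 0 /\ v0 = 0 /\ v1 = 0).
  move=> H; apply: nd; destruct H as (H0 & H1 & H2 & H3 & H4 & H5); do !split => //; lra.
have [x [y [z [u v]]]] := @case_b (- (a0 + - a0)) a0 (- a0) v2 v0 v1 ltac:(lra)
    ltac:(lra) ltac:(lra) ltac:(lra) ltac:(lra) nd'.
do !split => //; lra.
Qed.


Lemma conv_scalar (ha hb hc wa wb wc : R) :
  hb = 0 -> ha = - hc -> wb = 0 -> 2%:R * wa ^+ 2 = hc ^+ 2 -> 2%:R * wc ^+ 2 = hc ^+ 2 ->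
  nP1 ha hb hc = 0 /\ nP2 ha hb hc wa wb wc = 0 /\ nP3 ha hb hc wa wb wc = 0 /\
  tt ha hb hc + k0 ha hb hc + k1 ha hb hc + k2 ha hb hc = 0 /\
  nB2 ha hb hc wa wb wc = 0 /\ nB3 ha hb hc wa wb wc = 0 /\ nB4 ha hb hc wa wb wc = 0.
Proof.
move=> e1 e2 e3 e4 e5; subst hb ha wb.
have m : hc * wa ^+ 2 = hc * wc ^+ 2.
  have : wa ^+ 2 = wc ^+ 2 by lra.
  by move=> ->.
rewrite /nP1 /nP2 /nP3 /nB2 /nB3 /nB4 /k0 /k1 /k2 /tt.
do !split; lra.
Qed.

End Scal.

Section M.
Variable R : realType.
Variable C : 'I_5 -> 'I_5 -> 'I_5 -> 'I_5 -> R.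
Hypothesis Ha : forall a b c d, C a b c d = - C b a c d.
Hypothesis Hb : forall a b c d, C a b c d = - C a b d c.
Hypothesis Hs : forall a b c d, C a b c d = C c d a b.
Hypothesis Hbi : forall a b c d, C a b c d + C a c d b + C a d b c = 0.
Hypothesis Htr : forall b d, \sum_(a < 5) \sum_(c < 5) Defs.eta R a c * C a b c d = 0.
Hypothesis Hpos : forall a b c d, (0 < bw a b c d)%R -> C a b c d = 0.
Hypothesis Hoff : forall i j : 'I_3, i != j -> Hm C i j = 0.

Lemma finish :
  let h0 := h C q0 in let h1 := h C q1 in let h2 := h C q2 in
  let v0 := w0 C in let v1 := w1 C in let v2 := w2 C in
  nP1 h0 h1 h2 = 0 -> nP2 h0 h1 h2 v0 v1 v2 = 0 -> nP3 h0 h1 h2 v0 v1 v2 = 0 ->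
  tt h0 h1 h2 + k0 h0 h1 h2 + k1 h0 h1 h2 + k2 h0 h1 h2 = 0 ->
  nB2 h0 h1 h2 v0 v1 v2 = 0 -> nB3 h0 h1 h2 v0 v1 v2 = 0 -> nB4 h0 h1 h2 v0 v1 v2 = 0 ->
  weyl_nilpotent C.
Proof.
move=> h0 h1 h2 v0 v1 v2 n1 n2 n3 b1 b2 b3 b4.
have [e1 [e2 e3]] := cPhiE Hb Hs Hbi Htr Hoff.
have [f1 [f2 [f3 f4]]] := cB0E Ha Hb Hs Hbi Htr Hoff.
have [g1 [g2 g3]] := cBpE Hs.
apply: (conv Ha Hb Hpos).
- rewrite CH3 e1 e2 e3 -/h0 -/h1 -/h2 -/v0 -/v1 -/v2 n1 n2 n3.
  by apply/matrixP => i j; rewrite !mxE; lra.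
- rewrite CH4 f1 f2 f3 f4 -/h0 -/h1 -/h2 -/v0 -/v1 -/v2 b1 b2 b3 b4.
  by apply/matrixP => i j; rewrite !mxE; lra.
- rewrite CH3 g1 g2 g3 e1 e2 e3 -/h0 -/h1 -/h2 -/v0 -/v1 -/v2 n1 n2 n3.
  by apply/matrixP => i j; rewrite !mxE; lra.
Qed.


Lemma allzero : h C q0 = 0 -> h C q1 = 0 -> h C q2 = 0 ->
  w0 C = 0 -> w1 C = 0 -> w2 C = 0 ->
  forall a b c d, bw a b c d == 0 -> C a b c d = 0.
Proof.
move=> z0 z1 z2 y0 y1 y2.
have [[e00 [e01 e02]] [[e10 [e11 e12]] [e20 [e21 e22]]]] := PhiEnt Hb Hs Hbi Htr Hoff.
have [[b00 [b01 [b02 b03]]] [[b10 [b11 [b12 b13]]] [[b20 [b21 [b22 b23]]] [b30 [b31 [b32 b33]]]]]]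
  := B0Ent Ha Hb Hs Hbi Htr Hoff.
rewrite /k0 /k1 /k2 /tt z0 z1 z2 y0 y1 y2 in e00 e01 e02 e10 e11 e12 e20 e21 e22
  b00 b01 b02 b03 b10 b11 b12 b13 b20 b21 b22 b23 b30 b31 b32 b33.
rewrite !mxE ?sp0 ?sp1 ?sp2 in e00 e01 e02 e10 e11 e12 e20 e21 e22.
rewrite /B0 !mxE in b00 b01 b02 b03 b10 b11 b12 b13 b20 b21 b22 b23 b30 b31 b32 b33.
case: paE => pa0 pa1 pa2 pa3; case: pbE => pb0 pb1 pb2 pb3.
rewrite ?pa0 ?pa1 ?pa2 ?pa3 ?pb0 ?pb1 ?pb2 ?pb3 ?sw0 ?sw1 ?sw2 ?sw3 ?sw4 in
  b00 b01 b02 b03 b10 b11 b12 b13 b20 b21 b22 b23 b30 b31 b32 b33.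
clear pa0 pa1 pa2 pa3 pb0 pb1 pb2 pb3 z0 z1 z2 y0 y1 y2 Hoff Htr Hbi Hpos.
rewrite ?oppr0 ?add0r ?mul0r ?subr0 ?addr0 ?add0r in e00 e01 e02 e10 e11 e12 e20 e21 e22 b00 b01 b02 b03 b10 b11 b12 b13 b20 b21 b22 b23 b30 b31 b32 b33.
move=> a b c d.
case: (ord5 a) => [->|[->|[->|[->|->]]]]; case: (ord5 b) => [->|[->|[->|[->|->]]]];
case: (ord5 c) => [->|[->|[->|[->|->]]]]; case: (ord5 d) => [->|[->|[->|[->|->]]]];
(try by []);
move=> _; first
  [ by rewrite ?(Cdiag1 Ha) ?(Cdiag2 Hb)
  | by rewrite ?e00 ?e01 ?e02 ?e10 ?e11 ?e12 ?e20 ?e21 ?e22 ?b00 ?b01 ?b02 ?b03 ?b10 ?b11 ?b12 ?b13 ?b20 ?b21 ?b22 ?b23 ?b30 ?b31 ?b32 ?b33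
  | by rewrite Ha ?e00 ?e01 ?e02 ?e10 ?e11 ?e12 ?e20 ?e21 ?e22 ?b00 ?b01 ?b02 ?b03 ?b10 ?b11 ?b12 ?b13 ?b20 ?b21 ?b22 ?b23 ?b30 ?b31 ?b32 ?b33 ?oppr0
  | by rewrite Hb ?e00 ?e01 ?e02 ?e10 ?e11 ?e12 ?e20 ?e21 ?e22 ?b00 ?b01 ?b02 ?b03 ?b10 ?b11 ?b12 ?b13 ?b20 ?b21 ?b22 ?b23 ?b30 ?b31 ?b32 ?b33 ?oppr0
  | by rewrite Ha Hb ?e00 ?e01 ?e02 ?e10 ?e11 ?e12 ?e20 ?e21 ?e22 ?b00 ?b01 ?b02 ?b03 ?b10 ?b11 ?b12 ?b13 ?b20 ?b21 ?b22 ?b23 ?b30 ?b31 ?b32 ?b33 ?oppr0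
  | by rewrite Hs ?e00 ?e01 ?e02 ?e10 ?e11 ?e12 ?e20 ?e21 ?e22 ?b00 ?b01 ?b02 ?b03 ?b10 ?b11 ?b12 ?b13 ?b20 ?b21 ?b22 ?b23 ?b30 ?b31 ?b32 ?b33 ?oppr0
  | by rewrite Hs Ha ?e00 ?e01 ?e02 ?e10 ?e11 ?e12 ?e20 ?e21 ?e22 ?b00 ?b01 ?b02 ?b03 ?b10 ?b11 ?b12 ?b13 ?b20 ?b21 ?b22 ?b23 ?b30 ?b31 ?b32 ?b33 ?oppr0
  | by rewrite Hs Hb ?e00 ?e01 ?e02 ?e10 ?e11 ?e12 ?e20 ?e21 ?e22 ?b00 ?b01 ?b02 ?b03 ?b10 ?b11 ?b12 ?b13 ?b20 ?b21 ?b22 ?b23 ?b30 ?b31 ?b32 ?b33 ?oppr0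
  | by rewrite Hs Ha Hb ?e00 ?e01 ?e02 ?e10 ?e11 ?e12 ?e20 ?e21 ?e22 ?b00 ?b01 ?b02 ?b03 ?b10 ?b11 ?b12 ?b13 ?b20 ?b21 ?b22 ?b23 ?b30 ?b31 ?b32 ?b33 ?oppr0 ].
Qed.

End M.

Lemma pF0 (s : 'S_3) : permFrame s fl = fl. Proof. by []. Qed.
Lemma pF1 (s : 'S_3) : permFrame s fn = fn. Proof. by []. Qed.
Lemma pFsp (s : 'S_3) i : permFrame s (sp i) = sp (s i).
Proof.
rewrite /permFrame /=.
congr (sp (s _)); apply/val_inj; rewrite /= subn2 /= inordK //.
Qed.

Section P.
Variable R : realType.
Variable C : 'I_5 -> 'I_5 -> 'I_5 -> 'I_5 -> R.
Hypothesis Hb : forall a b c d, C a b c d = - C a b d c.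

Lemma RiP (s : 'S_3) i : Ri (permC s C) i = Hm C (s i) (s i).
Proof.
rewrite /Ri /Sm eqxx mulr1 subrK /Hm /permC.
under eq_bigr do rewrite !pFsp.
by rewrite [RHS](reindex_inj (@perm_inj _ s)).
Qed.

Lemma wvP (s : 'S_3) :
  wv (permC s C) q0 = C fl fn (sp (s q1)) (sp (s q2)) /\
  wv (permC s C) q1 = C fl fn (sp (s q2)) (sp (s q0)) /\
  wv (permC s C) q2 = C fl fn (sp (s q0)) (sp (s q1)).
Proof.
rewrite /wv !sum3 /permC /eps /= !pF0 !pF1 !pFsp.
rewrite (Hb fl fn (sp (s q2)) (sp (s q1))) (Hb fl fn (sp (s q0)) (sp (s q2)))
  (Hb fl fn (sp (s q1)) (sp (s q0))).
by repeat split; field.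
Qed.

End P.

Unset Implicit Arguments.

Theorem mainTheorem4 (R : realType) (C : 'I_5 -> 'I_5 -> 'I_5 -> 'I_5 -> R) :
  is_weyl C ->
  typeII_frame C ->
  (forall i j : 'I_3, i != j -> Sm C i j = 0) ->
  (weyl_nilpotent C <->
   exists s : 'S_3,
     Ri (permC s C) m4 = 0 /\
     Ri (permC s C) m3 = - Ri (permC s C) m5 /\
     Ri (permC s C) m5 != 0 /\
     2%:R * wv (permC s C) m3 ^+ 2 = Ri (permC s C) m5 ^+ 2 /\
     2%:R * wv (permC s C) m5 ^+ 2 = Ri (permC s C) m5 ^+ 2 /\
     wv (permC s C) m4 = 0).
Proof.
case=> Ha Hb Hs Hbi Htr [Hpos [a [b [c [d [Hbw HC]]]]]] HS.
have Hoff : forall i j : 'I_3, i != j -> Hm C i j = 0.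
  by move=> i j ij; have := HS i j ij; rewrite /Sm (negbTE ij) mulr0 subr0.
have f0 : C o0 o1 o4 o3 = - w0 C by rewrite Hb.
have f1 : C o0 o1 o2 o4 = - w1 C by rewrite Hb.
have f2 : C o0 o1 o3 o2 = - w2 C by rewrite Hb.
rewrite m3q m4q m5q.
split.
- move=> Hn.
  have [N1 N0] := fwd Ha Hb Hpos Hn.
  have [c1 [c2 c3]] := nil3 N1; have [d1 [d2 [d3 d4]]] := nil4 N0.
  have [e1 [e2 e3]] := cPhiE Hb Hs Hbi Htr Hoff.
  have [g1 [g2 [g3 g4]]] := cB0E Ha Hb Hs Hbi Htr Hoff.
  have nd : ~ (h C q0 = 0 /\ h C q1 = 0 /\ h C q2 = 0 /\ w0 C = 0 /\ w1 C = 0 /\ w2 C = 0).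
    case=> z0 [z1 [z2 [y0 [y1 y2]]]]; move/eqP: HC; apply.
    by apply: (allzero Ha Hb Hs Hbi Htr Hoff z0 z1 z2 y0 y1 y2); apply/eqP.
  have := fwd_scalar (a0 := h C q0) (a1 := h C q1) (a2 := h C q2)
    (v0 := w0 C) (v1 := w1 C) (v2 := w2 C).
  case.
  + by rewrite e1 in c1; lra.
  + by rewrite e2 in c2; lra.
  + by rewrite e3 in c3; lra.
  + by rewrite g3 in d3.
  + by rewrite g4 in d4.
  + exact: nd.
  + move=> [z0 [y0 [e [n [p1 p2]]]]]; exists (tperm q0 q1).
    have [wa [wb wc]] := wvP Hb (tperm q0 q1).
    rewrite !(RiP C) wa wb wc ?tpermL ?tpermR ?tpermD // ?sp0 ?sp1 ?sp2 ?flo ?fno ?f0 ?f1 ?f2 ?sqrrN.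
    rewrite /h in z0 e n p1 p2; rewrite -?/(w0 C) -?/(w1 C) -?/(w2 C).
    by do !split => //; lra.
  + case=> [[z0 [y0 [e [n [p1 p2]]]]]|[z0 [y0 [e [n [p1 p2]]]]]].
   * exists (1%g : {perm 'I_3}).
     have [wa [wb wc]] := wvP Hb (1%g : {perm 'I_3}).
     rewrite !perm1 in wa wb wc.
     rewrite !(RiP C) ?perm1 wa wb wc ?tpermL ?tpermR ?tpermD // ?sp0 ?sp1 ?sp2 ?flo ?fno ?f0 ?f1 ?f2 ?sqrrN.
     rewrite /h in z0 e n p1 p2; rewrite -?/(w0 C) -?/(w1 C) -?/(w2 C).
     by do !split => //; lra.
   * exists (tperm q1 q2).
     have [wa [wb wc]] := wvP Hb (tperm q1 q2).
     rewrite !(RiP C) wa wb wc ?tpermL ?tpermR ?tpermD // ?sp0 ?sp1 ?sp2 ?flo ?fno ?f0 ?f1 ?f2 ?sqrrN.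
     rewrite /h in z0 e n p1 p2; rewrite -?/(w0 C) -?/(w1 C) -?/(w2 C).
     by do !split => //; lra.
- move=> [s [r4 [r35 [r5 [w3 [w5 w4]]]]]].
  have [wa [wb wc]] := wvP Hb s.
  rewrite !(RiP C) in r4 r35 r5 w3 w5; rewrite wa in w3; rewrite wc in w5; rewrite wb in w4.
  have i01 : s q0 != s q1 by rewrite (inj_eq (@perm_inj _ s)).
  have i02 : s q0 != s q2 by rewrite (inj_eq (@perm_inj _ s)).
  have i12 : s q1 != s q2 by rewrite (inj_eq (@perm_inj _ s)).
  clear wa wb wc.
  move: r4 r35 r5 w3 w5 w4 i01 i02 i12.
  case: (ord3 (s q0)) => ->; case: (ord3 (s q1)) => ->; case: (ord3 (s q2)) => ->;
    move=> r4 r35 r5 w3 w5 w4 i01 i02 i12; try by [].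
  all: rewrite ?sp0 ?sp1 ?sp2 ?flo ?fno ?f0 ?f1 ?f2 ?sqrrN in w3 w5 w4.
  all: move/eqP: w4; rewrite ?oppr_eq0 => /eqP w4.
  all: apply: (finish Ha Hb Hs Hbi Htr Hpos Hoff);
    have := conv_scalar r4 r35 w4 w3 w5;
    rewrite /h /w0 /w1 /w2 /nP1 /nP2 /nP3 /nB2 /nB3 /nB4 /k0 /k1 /k2 /tt;
    move=> [n1 [n2 [n3 [n4 [n5 [n6 n7]]]]]]; lra.
Qed.
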